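(* Let $V:\mathbb{Z}\to\mathbb{R}$ with $|V(j)|\to0$ as $|j|\to\infty$ and $H=-\Delta+V$ on $\ell^2(\mathbb{Z})$, where $(\Delta u)(j)=u(j+1)-2u(j)+u(j-1)$. Let $e\in\mathbb{R}\setminus[0,4]$ be an eigenvalue of $H$ with $\dim\ker(H-e)=1$. For $a>0$ let $(T_au)(j)=e^{a|j|}u(j)$. Then for all sufficiently small $a>0$ there exist $e_a\in\mathbb{R}$ and $\phi_a\in\ell^2(\mathbb{Z})\setminus\{0\}$ such that $e_a\to e$ as $a\to0$ and $$T_a(-\Delta+V)T_a^{-1}\phi_a=e_a\phi_a.$$ *)

(* Defs.v *)
From Stdlib Require Import Reals ZArith.
From Coquelicot Require Import Coquelicot.

Definition l2 (u : Z -> C) : Prop :=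
  ex_series (fun n : nat => (Cmod (u (Z.of_nat n)) ^ 2)%R) /\
  ex_series (fun n : nat => (Cmod (u (- Z.of_nat n)%Z) ^ 2)%R).

Definition lap (u : Z -> C) (j : Z) : C :=
  Cplus (Cminus (u (j + 1)%Z) (Cmult (RtoC 2) (u j))) (u (j - 1)%Z).

Definition Hop (V : Z -> R) (u : Z -> C) (j : Z) : C :=
  Cplus (Copp (lap u j)) (Cmult (RtoC (V j)) (u j)).

Definition Ta (a : R) (u : Z -> C) (j : Z) : C :=
  Cmult (RtoC (exp (a * IZR (Z.abs j)))) (u j).
Definition Tainv (a : R) (u : Z -> C) (j : Z) : C :=
  Cmult (RtoC (exp (- (a * IZR (Z.abs j))))) (u j).

Definition vanishes_at_infinity (V : Z -> R) : Prop :=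
  forall eps : R, (0 < eps)%R ->
    exists N : Z, forall j : Z, (N < Z.abs j)%Z -> (Rabs (V j) < eps)%R.

Definition ker_dim_one (V : Z -> R) (e : R) : Prop :=
  exists u0 : Z -> C,
    l2 u0 /\ (exists j, u0 j <> RtoC 0) /\
    (forall j, Hop V u0 j = Cmult (RtoC e) (u0 j)) /\
    (forall u : Z -> C, l2 u -> (forall j, Hop V u j = Cmult (RtoC e) (u j)) ->
       exists c : C, forall j, u j = Cmult c (u0 j)).

(* Main.v *)
Require Import Defs.
From Stdlib Require Import Reals ZArith Lra Lia Psatz FunctionalExtensionality.
From Coquelicot Require Import Coquelicot.

Open Scope R_scope.

Lemma decay (g : nat -> R) (K : R) (N : nat) : 2 < K -> (forall n, 0 <= g n) ->
  ex_series (fun n => g n ^ 2) ->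
  (forall n, (N <= n)%nat -> K * g (S n) <= g (S (S n)) + g n) ->
  forall k, g (N + k)%nat <= (2/K)^k * g N.
Proof.
  intros HK Hg Hs Hrec.
  set (r := 2/K). set (s := K/2).
  assert (Hr0 : 0 < r) by (unfold r; apply Rdiv_lt_0_compat; lra).
  assert (Hrs : r * s = 1) by (unfold r, s; field; lra).
  assert (Hs1 : 1 <= s) by (unfold s; lra).
  assert (HKrs : r + s <= K).
  { unfold r, s. assert (2/K <= K/2). { apply Rmult_le_reg_r with (2*K). nra.
      field_simplify; try lra. nra. } lra. }
  set (D := fun n => g (S n) - r * g n).
  assert (St1 : forall n, (N <= n)%nat -> D (S n) >= s * D n).
  { intros n Hn. unfold D. specialize (Hrec n Hn). pose proof (Hg n). pose proof (Hg (S n)).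
    assert ((K - r - s) * g (S n) >= 0) by (apply Rle_ge, Rmult_le_pos; lra).
    assert (s * (r * g n) = g n) by (rewrite <- Rmult_assoc, (Rmult_comm s r), Hrs; ring).
    nra. }
  assert (St2 : forall n, (N <= n)%nat -> g (S n) <= r * g n).
  { intros n0 Hn0. destruct (Rle_dec (D n0) 0) as [Hle|Hgt]. { unfold D in Hle. lra. }
    exfalso. apply Rnot_le_lt in Hgt.
    assert (Hk : forall k, D (n0 + k)%nat >= D n0).
    { induction k. rewrite Nat.add_0_r. lra.
      rewrite Nat.add_succ_r. specialize (St1 (n0 + k)%nat ltac:(lia)). nra. }
    apply ex_series_lim_0 in Hs. apply is_lim_seq_spec in Hs.
    destruct (Hs (mkposreal (D n0 ^ 2) ltac:(apply pow_lt; lra))) as [M HM].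
    specialize (HM (S (n0 + M))%nat ltac:(lia)). simpl in HM.
    specialize (Hk M). unfold D in Hk. pose proof (Hg (n0+M)%nat). pose proof (Hg (S (n0 + M))).
    assert (D n0 <= g (S (n0 + M))) by (unfold D in *; nra).
    rewrite Rminus_0_r, Rabs_right in HM by (apply Rle_ge; simpl; nra).
    simpl in HM. nra. }
  induction k. rewrite Nat.add_0_r. simpl. lra.
  rewrite Nat.add_succ_r. specialize (St2 (N + k)%nat ltac:(lia)).
  simpl. fold r in IHk |- *. nra.
Qed.

Lemma rel_of_eig (V : Z -> R) (e : R) (u0 : Z -> C)
  (Heig : forall j, Hop V u0 j = Cmult (RtoC e) (u0 j)) :
  forall j, Rabs (2 + V j - e) * Cmod (u0 j) <= Cmod (u0 (j+1)%Z) + Cmod (u0 (j-1)%Z).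
Proof.
  intros j. specialize (Heig j). unfold Hop, lap in Heig.
  set (a := u0 (j+1)%Z) in *. set (b := u0 j) in *. set (c := u0 (j-1)%Z) in *.
  assert (E : Cplus a c = Cmult (RtoC (2 + V j - e)) b).
  { rewrite RtoC_minus, RtoC_plus.
    assert (E : Cplus a c = Cplus (Cmult (Cminus (Cplus (RtoC 2) (RtoC (V j))) (RtoC e)) b)
       (Cminus (Cmult (RtoC e) b) (Cplus (Copp (Cplus (Cminus a (Cmult (RtoC 2) b)) c)) (Cmult (RtoC (V j)) b)))) by ring.
    rewrite E, Heig. ring. }
  rewrite <- Cmod_R, <- Cmod_mult, <- E. apply Cmod_triangle.
Qed.

Lemma exp_INR_plus (a : R) (N k : nat) : exp (a * INR (N + k)) = exp (a * INR N) * exp a ^ k.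
Proof.
  induction k. rewrite Nat.add_0_r. simpl. ring.
  rewrite Nat.add_succ_r, S_INR. simpl.
  replace (a * (INR (N + k) + 1)) with (a * INR (N+k) + a) by ring.
  rewrite exp_plus, IHk. ring.
Qed.

Lemma l2side (g h : nat -> R) (a r : R) (Nn : nat) : 0 < r -> exp a * r < 1 ->
  (forall n, 0 <= g n) -> (forall k, g (Nn + k)%nat <= r ^ k * g Nn) ->
  (forall n, h n = (exp (a * INR n) * g n) ^ 2) -> ex_series h.
Proof.
  intros Hr Har Hg Hdec Hh.
  apply (ex_series_incr_n h Nn).
  apply (@ex_series_le R_AbsRing R_CompleteNormedModule) with (b := fun k => (exp (a * INR Nn) * g Nn) ^ 2 * ((exp a * r) ^ 2) ^ k).
  - intros k. rewrite Hh, exp_INR_plus.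
    replace (((exp a * r) ^ 2) ^ k) with ((exp a ^ k) ^ 2 * (r ^ k) ^ 2).
    2:{ rewrite <- Rpow_mult_distr, <- Rpow_mult_distr, <- !pow_mult, Nat.mul_comm. reflexivity. }
    pose proof (exp_pos a). pose proof (exp_pos (a * INR Nn)).
    assert (0 < exp a ^ k) by (apply pow_lt; lra).
    pose proof (Hg (Nn + k)%nat). specialize (Hdec k).
    set (x := exp (a * INR Nn) * exp a ^ k * g (Nn + k)%nat).
    assert (0 <= x) by (unfold x; apply Rmult_le_pos; [apply Rmult_le_pos|]; lra).
    change (norm x) with (Rabs (x ^ 2)) . 
    rewrite Rabs_right by (apply Rle_ge, pow_le; lra).
    assert (x <= exp (a * INR Nn) * exp a ^ k * (r ^ k * g Nn)).
    { unfold x. apply Rmult_le_compat_l; [apply Rmult_le_pos|]; lra. }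
    assert (x ^ 2 <= (exp (a * INR Nn) * exp a ^ k * (r ^ k * g Nn)) ^ 2) by (apply pow_incr; lra).
    lra.
  - apply ex_series_ext with (a := fun k => scal ((exp (a * INR Nn) * g Nn) ^ 2) (((exp a * r) ^ 2) ^ k)).
    { intros; reflexivity. }
    apply (@ex_series_scal R_AbsRing R_NormedModule). apply ex_series_geom.
    pose proof (exp_pos a).
    assert (0 <= exp a * r) by (apply Rmult_le_pos; lra).
    rewrite Rabs_right. 2:{ apply Rle_ge, pow_le. lra. } simpl. nra.
Qed.

Lemma Cmod_Ta (a : R) (u : Z -> C) (j : Z) :
  Cmod (Ta a u j) = exp (a * IZR (Z.abs j)) * Cmod (u j).
Proof. unfold Ta. rewrite Cmod_mult, Cmod_R, Rabs_right; [reflexivity|]. apply Rle_ge, Rlt_le, exp_pos. Qed.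

Theorem lemmaA1 (V : Z -> R) (e : R)
  (hV : vanishes_at_infinity V)
  (he : (e < 0)%R \/ (4 < e)%R)
  (hker : ker_dim_one V e) :
  exists a0 : R, (0 < a0)%R /\
  exists (E : R -> R) (Phi : R -> Z -> C),
    (forall a : R, (0 < a < a0)%R ->
       l2 (Phi a) /\ (exists j, Phi a j <> RtoC 0) /\
       (forall j, Ta a (Hop V (Tainv a (Phi a))) j = Cmult (RtoC (E a)) (Phi a j))) /\
    (forall eps : R, (0 < eps)%R -> exists delta : R, (0 < delta)%R /\
       forall a : R, (0 < a < a0)%R -> (a < delta)%R -> (Rabs (E a - e) < eps)%R).
Proof.
  destruct hker as [u0 [[Hs1 Hs2] [[j0 Hj0] [Heig _]]]].
  set (d := Rabs (2 - e) - 2).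
  assert (Hd : 0 < d) by (unfold d, Rabs; destruct Rcase_abs; lra).
  set (K := 2 + d / 2).
  assert (HK : 2 < K) by (unfold K; lra).
  destruct (hV (d/2) ltac:(lra)) as [N HN].
  assert (HVK : forall j, (N < Z.abs j)%Z -> K <= Rabs (2 + V j - e)).
  { intros j Hj. specialize (HN j Hj).
    pose proof (Rabs_triang (2 + V j - e) (- V j)). rewrite Rabs_Ropp in H.
    replace (2 + V j - e + - V j) with (2 - e) in H by ring. unfold K, d in *. lra. }
  pose proof (rel_of_eig V e u0 Heig) as Hrel.
  set (Nn := Z.to_nat (Z.abs N)).
  set (gp := fun n : nat => Cmod (u0 (Z.of_nat n))).
  set (gm := fun n : nat => Cmod (u0 (- Z.of_nat n)%Z)).
  assert (Hp : forall k, gp (Nn + k)%nat <= (2/K)^k * gp Nn).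
  { apply decay; [lra | intros; apply Cmod_ge_0 | exact Hs1 |].
    intros n Hn. unfold gp. specialize (Hrel (Z.of_nat (S n))).
    replace (Z.of_nat (S n) + 1)%Z with (Z.of_nat (S (S n))) in Hrel by lia.
    replace (Z.of_nat (S n) - 1)%Z with (Z.of_nat n) in Hrel by lia.
    assert (K <= Rabs (2 + V (Z.of_nat (S n)) - e)) by (apply HVK; unfold Nn in Hn; lia).
    pose proof (Cmod_ge_0 (u0 (Z.of_nat (S n)))). nra. }
  assert (Hm : forall k, gm (Nn + k)%nat <= (2/K)^k * gm Nn).
  { apply decay; [lra | intros; apply Cmod_ge_0 | exact Hs2 |].
    intros n Hn. unfold gm. specialize (Hrel (- Z.of_nat (S n))%Z).
    replace (- Z.of_nat (S n) + 1)%Z with (- Z.of_nat n)%Z in Hrel by lia.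
    replace (- Z.of_nat (S n) - 1)%Z with (- Z.of_nat (S (S n)))%Z in Hrel by lia.
    assert (K <= Rabs (2 + V (- Z.of_nat (S n))%Z - e)) by (apply HVK; unfold Nn in Hn; lia).
    pose proof (Cmod_ge_0 (u0 (- Z.of_nat (S n))%Z)). nra. }
  set (r := 2 / K).
  assert (Hr0 : 0 < r) by (unfold r; apply Rdiv_lt_0_compat; lra).
  assert (Hr1 : r < 1) by (unfold r; apply Rmult_lt_reg_r with K; [lra|]; field_simplify; lra).
  assert (Hlnr : ln r < 0) by (rewrite <- ln_1; apply ln_increasing; lra).
  exists (- ln r). split; [lra|].
  exists (fun _ => e), (fun a => Ta a u0). split.
  - intros a [Ha1 Ha2].
    assert (Har : exp a * r < 1).
    { assert (exp a < / r).
      { rewrite <- (exp_ln r Hr0), <- exp_Ropp. apply exp_increasing. lra. }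
      apply Rmult_lt_compat_r with (r := r) in H; [|lra].
      rewrite Rinv_l in H by lra. exact H. }
    split; [|split].
    + split.
      * apply (l2side gp _ a r Nn Hr0 Har); [intros; apply Cmod_ge_0 | exact Hp |].
        intros n. rewrite Cmod_Ta. unfold gp.
        rewrite Z.abs_eq by lia. rewrite <- INR_IZR_INZ. reflexivity.
      * apply (l2side gm _ a r Nn Hr0 Har); [intros; apply Cmod_ge_0 | exact Hm |].
        intros n. rewrite Cmod_Ta. unfold gm.
        rewrite Z.abs_opp, Z.abs_eq by lia. rewrite <- INR_IZR_INZ. reflexivity.
    + exists j0. intro H. apply Hj0. apply Cmod_eq_0.
      apply (f_equal Cmod) in H. rewrite Cmod_Ta, Cmod_0 in H.
      pose proof (exp_pos (a * IZR (Z.abs j0))).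
      apply Rmult_integral in H. destruct H; [lra | exact H].
    + intros j.
      assert (Hinv : Tainv a (Ta a u0) = u0).
      { apply functional_extensionality. intros x. unfold Tainv, Ta.
        rewrite Cmult_assoc, <- RtoC_mult, <- exp_plus, Rplus_opp_l, exp_0. apply Cmult_1_l. }
      rewrite Hinv. unfold Ta at 1. rewrite Heig. unfold Ta. ring.
  - intros eps Heps. exists 1. split; [lra|]. intros. unfold Rminus. rewrite Rplus_opp_r, Rabs_R0. exact Heps.
Qed.
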